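(* Let $m,n$ be positive integers and let $u\in\{1,s_0,\dots,s_{m-1},t_1,\dots,t_{n-2}\}$. Then $$\deg_u(1)\le\deg_u(x_1)\le\dots\le\deg_u(x_{m-1})\le\deg_u(y_1)\le\dots\le\deg_u(y_{n-1})\le\deg_u(x_1y_1)\le\deg_u(x_1y_2)\le\dots\le\deg_u(x_1y_{n-1})\le\deg_u(x_2y_1)\le\dots\le\deg_u(x_{m-1}y_{n-1}).$$
   Context: Variables $s_0,\dots,s_{m-1},t_1,\dots,t_{n-2}$; $T=t_1\cdots t_{n-2}$. Monomials $x_i=s_1s_2\cdots s_i\,T^i$ for $1\le i\le m-1$ and $y_j=s_0s_1\cdots s_{m-1}\,T^{m-1}\,t_1\cdots t_{j-1}$ for $1\le j\le n-1$. For a monomial $M$ and a variable $u$, $\deg_u(M)$ is the exponent of $u$ in $M$ (and $\deg_1(M)$ is taken to be $0$). The products $x_iy_j$ are listed in lexicographic order of $(i,j)$. *)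

(* Defs.v *)
From mathcomp Require Import all_boot.
Set Implicit Arguments. Unset Strict Implicit. Unset Printing Implicit Defensive.

Inductive var := sv of nat | tv of nat.

(* A monomial is represented by its exponent vector: M v = deg_v(M). *)
Definition monom := var -> nat.
Definition mone : monom := fun _ => 0.
Definition mmul (a b : monom) : monom := fun v => a v + b v.
Definition mvar (v : var) : monom := fun w =>
  match v, w with
  | sv i, sv j => nat_of_bool (i == j)
  | tv i, tv j => nat_of_bool (i == j)
  | _, _ => 0
  end.
Definition mprod (s : seq monom) : monom := foldr mmul mone s.
Definition mpow (a : monom) (e : nat) : monom := mprod (nseq e a).

Definition Tm (n : nat) : monom := mprod [seq mvar (tv l) | l <- iota 1 (n - 2)].
Definition xm (n i : nat) : monom :=
  mmul (mprod [seq mvar (sv k) | k <- iota 1 i]) (mpow (Tm n) i).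
Definition ym (m n j : nat) : monom :=
  mmul (mmul (mprod [seq mvar (sv k) | k <- iota 0 m]) (mpow (Tm n) (m - 1)))
       (mprod [seq mvar (tv l) | l <- iota 1 (j - 1)]).

(* deg_u; u = None stands for the "variable" 1, with deg_1 = 0 *)
Definition deg (u : option var) (M : monom) : nat :=
  match u with None => 0 | Some v => M v end.

Definition chain (m n : nat) : seq monom :=
  [:: mone] ++ [seq xm n i | i <- iota 1 (m - 1)]
  ++ [seq ym m n j | j <- iota 1 (n - 1)]
  ++ flatten [seq [seq mmul (xm n i) (ym m n j) | j <- iota 1 (n - 1)]
             | i <- iota 1 (m - 1)].

(* Main.v *)
Require Import Defs.
From mathcomp Require Import all_boot zify.

Lemma mprodE s v : mprod s v = sumn [seq M v | M <- s].
Proof. by elim: s => //= a s IH; rewrite /mmul IH. Qed.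

Lemma mpowE a e v : mpow a e v = e * a v.
Proof. rewrite /mpow mprodE; elim: e => //= e ->; lia. Qed.

Lemma sumn_eq a b k : sumn [seq nat_of_bool (i == k) | i <- iota a b] = (a <= k < a + b).
Proof.
elim: b a => [|b IH] a /=; first by rewrite addn0; case: leqP => //= h; lia.
rewrite IH; case: eqP => [->|ne] /=; lia.
Qed.

Lemma sumn0 a b : sumn [seq 0 | i <- iota a b] = 0.
Proof. by elim: b a => //= b IH a; rewrite IH. Qed.

Lemma Tm_s n k : Tm n (sv k) = 0.
Proof. rewrite /Tm mprodE -map_comp /=; exact: sumn0. Qed.

Lemma Tm_t n l : Tm n (tv l) = (1 <= l < 1 + (n - 2)).
Proof. by rewrite /Tm mprodE -map_comp; apply: sumn_eq. Qed.

Lemma xm_s n i k : xm n i (sv k) = (1 <= k < 1 + i).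
Proof. by rewrite /xm /mmul mpowE Tm_s muln0 addn0 mprodE -map_comp; apply: sumn_eq. Qed.

Lemma xm_t n i l : xm n i (tv l) = i * (1 <= l < 1 + (n - 2)).
Proof. by rewrite /xm /mmul mpowE Tm_t mprodE -map_comp /= sumn0. Qed.

Lemma ym_s m n j k : ym m n j (sv k) = (0 <= k < 0 + m).
Proof. by rewrite /ym /mmul mpowE Tm_s muln0 !mprodE -!map_comp /= sumn0 sumn_eq !addn0. Qed.

Lemma ym_t m n j l : ym m n j (tv l) = (m - 1) * (1 <= l < 1 + (n - 2)) + (1 <= l < 1 + (j - 1)).
Proof. by rewrite /ym /mmul mpowE Tm_t !mprodE -!map_comp /= sumn0 sumn_eq. Qed.

Lemma pairwise_iota (r : rel nat) a b :
  (forall i j, a <= i -> i < j -> j < a + b -> r i j) -> pairwise r (iota a b).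
Proof.
elim: b a => [|b IH] a H //=.
apply/andP; split.
  apply/allP => j; rewrite mem_iota => /andP[h1 h2]; apply: H; lia.
apply: IH => i j h1 h2 h3; apply: H; lia.
Qed.

Lemma key (f g : nat -> nat) m n :
  (forall i i', 1 <= i -> i <= i' -> i' < m -> f i <= f i') ->
  (forall i j, 1 <= i < m -> 1 <= j < n -> f i <= g j) ->
  (forall j j', 1 <= j -> j <= j' -> j' < n -> g j <= g j') ->
  (forall i j j', 1 <= i < m -> 1 <= j < n -> 1 <= j' < n -> g j <= f i + g j') ->
  (forall i i' j j', 1 <= i -> i < i' -> i' < m -> 1 <= j < n -> 1 <= j' < n ->
      f i + g j <= f i' + g j') ->
  sorted leq (0 :: [seq f i | i <- iota 1 (m - 1)] ++ [seq g j | j <- iota 1 (n - 1)]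
     ++ flatten [seq [seq f i + g j | j <- iota 1 (n - 1)] | i <- iota 1 (m - 1)]).
Proof.
move=> H1 H2 H3 H4 H5.
apply: pairwise_sorted.
have memF : forall z, z \in flatten [seq [seq f i + g j | j <- iota 1 (n - 1)] | i <- iota 1 (m - 1)] ->
   exists i j, [/\ 1 <= i < m, 1 <= j < n & z = f i + g j].
  move=> z /flatten_mapP[i]; rewrite mem_iota => hi /mapP[j]; rewrite mem_iota => hj ->.
  exists i, j; split => //; lia.
have memM : forall (h : nat -> nat) k z, z \in [seq h i | i <- iota 1 (k - 1)] ->
   exists i, 1 <= i < k /\ z = h i.
  move=> h k z /mapP[i]; rewrite mem_iota => hi ->; exists i; split => //; lia.
rewrite pairwise_cons; apply/andP; split; first by apply/allP.
rewrite !pairwise_cat !pairwise_map; apply/and3P; split.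
- rewrite allrel_catr; apply/andP; split; apply/allrelP => x y.
    move=> /memM[i [hi ->]] /memM[j [hj ->]]; exact: H2.
  move=> /memM[i [hi ->]] /memF[i' [j [hi' hj ->]]].
  apply: leq_trans (H2 i j hi hj) _; exact: leq_addl.
- apply: pairwise_iota => i j hi hij hj; apply: H1; lia.
- apply/and3P; split.
  + apply/allrelP => x y /memM[j [hj ->]] /memF[i [j' [hi hj' ->]]]; exact: H4.
  + apply: pairwise_iota => i j hi hij hj; apply: H3; lia.
  + have : forall a, 1 <= a -> pairwise leq (flatten [seq [seq f i + g j | j <- iota 1 (n - 1)] | i <- iota a (m - a)]).
      move=> a; move Ec: (m - a) => c; elim: c a Ec => [|c IH] a Ec ha //=.
      rewrite pairwise_cat; apply/and3P; split.
      * apply/allrelP => x y /mapP[j]; rewrite mem_iota => hj -> /flatten_mapP[i].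
        rewrite mem_iota => hi /mapP[j']; rewrite mem_iota => hj' ->.
        apply: H5; lia.
      * rewrite pairwise_map; apply: pairwise_iota => i j hi hij hj; rewrite /relpre /=.
        rewrite leq_add2l; apply: H3; lia.
      * apply: IH; lia.
    by move/(_ 1 isT).
Qed.

Lemma degM u a b : deg u (mmul a b) = deg u a + deg u b.
Proof. by case: u. Qed.

Theorem mainTheorem18 (m n : nat) (u : option var) :
  0 < m -> 0 < n ->
  (u = None \/ (exists k, k < m /\ u = Some (sv k))
            \/ (exists l, 1 <= l <= n - 2 /\ u = Some (tv l))) ->
  sorted leq [seq deg u M | M <- chain m n].
Proof.
move=> hm hn hu.
have -> : [seq deg u M | M <- chain m n] =
  0 :: [seq deg u (xm n i) | i <- iota 1 (m - 1)] ++ [seq deg u (ym m n j) | j <- iota 1 (n - 1)]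
     ++ flatten [seq [seq deg u (xm n i) + deg u (ym m n j) | j <- iota 1 (n - 1)] | i <- iota 1 (m - 1)].
  rewrite /chain /= !map_cat map_flatten -!map_comp; congr (_ :: _ ++ _ ++ flatten _).
    by case: u {hu}.
  by apply: eq_map => i /=; rewrite -map_comp; apply: eq_map => j /=; rewrite degM.
case: hu => [->|[[k [hk ->]]|[l [hl ->]]]].
- by apply: key.
- apply: key => /= *; rewrite ?xm_s ?ym_s; lia.
- apply: key => /= *; rewrite ?xm_t ?ym_t; lia.
Qed.
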